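(* Let $k,m$ be integers with $k\ge 2$, $m\ge 3k+8$ and $m\equiv k \pmod 2$. Let $a=(3m+k)/2$ and $S=\langle m,a,a+1\rangle_{4m}$. Then $W_0(S)=-1$.
   Context: $\mathbb N=\{0,1,2,\dots\}$; $[x,y]=\{z\in\mathbb Z: x\le z\le y\}$. For positive integers $a_1,\dots,a_n,t$, $\langle a_1,\dots,a_n\rangle_t=(\mathbb N a_1+\dots+\mathbb N a_n)\cup\{z\in\mathbb Z: z\ge t\}$; this is a numerical semigroup. A numerical semigroup is a submonoid $S\subseteq\mathbb N$ with $\mathbb N\setminus S$ finite; multiplicity $m=\min(S\setminus\{0\})$; conductor $c=1+\max(\mathbb Z\setminus S)$; $q=\lceil c/m\rceil$, $\rho=qm-c$. Let $S^*=S\setminus\{0\}$, $D=S^*+S^*$, $P=S^*\setminus D$, $L=S\cap[0,c-1]$, $D_q=D\cap[c,c+m-1]$, and $W_0(S)=|P\cap L|\,|L|-q|D_q|+\rho$. *)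

(* Defs.v *)
From mathcomp Require Import all_boot all_order all_algebra.
Set Implicit Arguments. Unset Strict Implicit. Unset Printing Implicit Defensive.
Import GRing.Theory Num.Theory.

Fixpoint nat_comb (gs : seq nat) (x : nat) : bool :=
  match gs with
  | [::] => x == 0
  | g :: gs' => [exists i : 'I_(x.+1), (i * g <= x) && nat_comb gs' (x - i * g)]
  end.

(* <a_1,...,a_n>_t = (N a_1 + ... + N a_n) ∪ {z >= t} *)
Definition inS (gs : seq nat) (t x : nat) : bool := (t <= x) || nat_comb gs x.

Section Invariants.
Variables (gs : seq nat) (t : nat).
Let S := inS gs t.

Definition inSstar (x : nat) : bool := (0 < x) && S x.
(* multiplicity m = min (S \ {0}); requires t >= 1 to be meaningful *)
Definition mult : nat := (find inSstar (iota 1 t)).+1.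
(* conductor c = 1 + max (Z \ S); all gaps lie below t; c = 0 iff S = N *)
Definition conductor : nat := \max_(x < t | ~~ S x) x.+1.
Definition qq : nat := (conductor + mult - 1) %/ mult.
Definition rho : int := (qq * mult)%:Z - conductor%:Z.
Definition inD (x : nat) : bool :=
  [exists y : 'I_x.+1, inSstar y && inSstar (x - y)].
Definition inP (x : nat) : bool := inSstar x && ~~ inD x.
Definition cardL : nat := count S (iota 0 conductor).
Definition cardPL : nat := count inP (iota 0 conductor).
Definition cardDq : nat := count inD (iota conductor mult).
Definition W0 : int := (cardPL * cardL)%:Z - (qq * cardDq)%:Z + rho.
End Invariants.

(* Main.v *)
Require Import Defs.
From mathcomp Require Import all_boot all_order all_algebra.
From mathcomp Require Import zify.
Import GRing.Theory Num.Theory.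

Definition hyp (m a k : nat) : Prop := a * 2 = 3 * m + k /\ 2 <= k /\ 3 * k + 8 <= m.

Ltac hd H := let H1 := fresh "H" in let H2 := fresh "H" in let H3 := fresh "H" in
  case: H => H1 [H2 H3].

Definition Lst (m a : nat) : seq nat :=
  [:: 0; m; a; a.+1; 2 * m; a + m; a + m + 1; 3 * m; 2 * a; 2 * a + 1; 2 * a + 2;
      a + 2 * m; a + 2 * m + 1].

Definition Dl (m a k : nat) : seq nat :=
  [:: 4 * m; 4 * m + k; 4 * m + k + 1; 4 * m + k + 2; 3 * m + a; 3 * m + a + 1;
      3 * a; 3 * a + 1; 3 * a + 2; 3 * a + 3].

Lemma nat_comb_cons g gs x : 0 < g ->
  reflect (exists i, i * g <= x /\ nat_comb gs (x - i * g)) (nat_comb (g :: gs) x).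
Proof.
move=> g0 /=; apply: (iffP existsP) => [[i /andP[h1 h2]]|[i [h1 h2]]].
  by exists i.
have hi : i < x.+1 by apply: leq_ltn_trans (leq_trans (leq_pmulr i g0) h1) _.
by exists (Ordinal hi); rewrite /= h1 h2.
Qed.

Lemma comb3 g1 g2 g3 x : 0 < g1 -> 0 < g2 -> 0 < g3 ->
  reflect (exists i j l, x = i * g1 + j * g2 + l * g3) (nat_comb [:: g1; g2; g3] x).
Proof.
move=> p1 p2 p3; apply: (iffP (@nat_comb_cons g1 [:: g2; g3] x p1)).
  move=> [i [h1 /(nat_comb_cons _ _ _ p2) [j [h2 /(nat_comb_cons _ _ _ p3) [l [h3 /eqP h4]]]]]].
  exists i, j, l; lia.
move=> [i [j [l ->]]]; exists i; split; first lia.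
apply/(nat_comb_cons _ _ _ p2); exists j; split; first lia.
apply/(nat_comb_cons _ _ _ p3); exists l; split; first lia.
by apply/eqP; lia.
Qed.

Lemma comb_of_L {m a k x} : hyp m a k -> x \in Lst m a -> nat_comb [:: m; a; a.+1] x.
Proof.
move=> H; have p1 : 0 < m by hd H; lia.
have p2 : 0 < a by hd H; lia.
move=> hx; apply/comb3 => //.
rewrite !inE in hx.
repeat (case/orP: hx => hx); move/eqP: hx => ->.
- by exists 0, 0, 0.
- by exists 1, 0, 0; lia.
- by exists 0, 1, 0; lia.
- by exists 0, 0, 1; lia.
- by exists 2, 0, 0; lia.
- by exists 1, 1, 0; lia.
- by exists 1, 0, 1; lia.
- by exists 3, 0, 0; lia.
- by exists 0, 2, 0; lia.
- by exists 0, 1, 1; lia.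
- by exists 0, 0, 2; lia.
- by exists 2, 1, 0; lia.
- by exists 2, 0, 1; lia.
Qed.

Lemma L_of_comb {m a k x} : hyp m a k -> x < 4 * m -> nat_comb [:: m; a; a.+1] x ->
  x \in Lst m a.
Proof.
move=> H hx; have p1 : 0 < m by hd H; lia.
have p2 : 0 < a by hd H; lia.
move/comb3 => /(_ p1 p2 (ltn0Sn a)) [i [j [l ex]]].
rewrite !inE; hd H.
case: i ex => [|[|[|[|i]]]] ex; try (exfalso; nia);
case: j ex => [|[|[|j]]] ex; try (exfalso; nia);
case: l ex => [|[|[|l]]] ex; try (exfalso; nia); lia.
Qed.

Lemma inS_of_L {m a k x} : hyp m a k -> x \in Lst m a -> inS [:: m; a; a.+1] (4 * m) x.
Proof. by move=> H hx; rewrite /inS (comb_of_L H hx) orbT. Qed.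

Lemma inS_char {m a k x} : hyp m a k -> x < 4 * m ->
  inS [:: m; a; a.+1] (4 * m) x = (x \in Lst m a).
Proof.
move=> H hx; apply/idP/idP; last exact: inS_of_L H.
rewrite /inS; case/orP => [h|]; first lia.
exact: (L_of_comb H hx).
Qed.

Lemma inS_low {m a k x} : hyp m a k -> inS [:: m; a; a.+1] (4 * m) x -> 0 < x -> m <= x.
Proof.
move=> H hs x0; case: (ltnP x (4 * m)) => hx; last lia.
move: hs; rewrite (inS_char H hx) !inE; hd H; lia.
Qed.

Lemma count_iota_eq (P : pred nat) lo n s : uniq s ->
  (forall x, x \in s -> lo <= x < lo + n) ->
  (forall x, lo <= x < lo + n -> P x = (x \in s)) -> count P (iota lo n) = size s.
Proof.
move=> us hs hP; rewrite -size_filter; apply: perm_size; apply: uniq_perm => //.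
  by rewrite filter_uniq ?iota_uniq.
move=> x; rewrite mem_filter mem_iota; apply/andP/idP => [[px r]|xs].
  by rewrite -hP.
have r := hs x xs; by rewrite hP.
Qed.

Lemma inD_wit {m a k x y} : hyp m a k -> 0 < y < x -> y \in Lst m a -> (x - y) \in Lst m a ->
  inD [:: m; a; a.+1] (4 * m) x.
Proof.
move=> H /andP[y0 yx] hy hz.
have hy' : y < x.+1 by lia.
apply/existsP; exists (Ordinal hy'); rewrite /inSstar /= y0 (inS_of_L H hy) (inS_of_L H hz).
by rewrite subn_gt0 yx.
Qed.

Lemma mult_eq {m a k} : hyp m a k -> mult [:: m; a; a.+1] (4 * m) = m.
Proof.
move=> H; rewrite /mult.
have -> : 4 * m = (m - 1) + (3 * m + 1) by hd H; lia.
rewrite iotaD find_cat.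
have -> : has (inSstar [:: m; a; a.+1] ((m - 1) + (3 * m + 1))) (iota 1 (m - 1)) = false.
  apply/hasPn => x; rewrite mem_iota => hx; rewrite /inSstar.
  have -> : (m - 1) + (3 * m + 1) = 4 * m by hd H; lia.
  apply/negP => /andP[x0 hs]; have := inS_low H hs x0; lia.
rewrite size_iota.
have -> : 1 + (m - 1) = m by hd H; lia.
have -> : 3 * m + 1 = (3 * m).+1 by lia.
rewrite /= /inSstar.
have -> : (m - 1) + (3 * m).+1 = 4 * m by hd H; lia.
rewrite (inS_of_L H) ?inE ?eqxx ?orbT //=.
have -> : 0 < m by hd H; lia.
rewrite /=; hd H; lia.
Qed.

Lemma cond_eq {m a k} : hyp m a k -> conductor [:: m; a; a.+1] (4 * m) = 4 * m.
Proof.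
move=> H; rewrite /conductor; apply/eqP; rewrite eqn_leq; apply/andP; split.
  by apply/bigmax_leqP => i _; exact: ltn_ord.
have hi : (4 * m).-1 < 4 * m by hd H; lia.
have := @leq_bigmax_cond _ (fun x : 'I_(4 * m) => ~~ inS [:: m; a; a.+1] (4 * m) x)
  (fun x : 'I_(4 * m) => (nat_of_ord x).+1) (Ordinal hi).
have -> : ((4 * m).-1).+1 = 4 * m by hd H; lia.
apply; rewrite /= (inS_char H hi) !inE; hd H; lia.
Qed.

Lemma qq_eq {m a k} : hyp m a k -> qq [:: m; a; a.+1] (4 * m) = 4.
Proof.
move=> H; rewrite /qq (cond_eq H) (mult_eq H).
have -> : 4 * m + m - 1 = 4 * m + (m - 1) by hd H; lia.
have m0 : 0 < m by hd H; lia.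
rewrite divnMDl // divn_small //; lia.
Qed.

Lemma rho_eq {m a k} : hyp m a k -> rho [:: m; a; a.+1] (4 * m) = 0%R.
Proof. by move=> H; rewrite /rho (qq_eq H) (mult_eq H) (cond_eq H) mulnC subrr. Qed.

Lemma cardL_eq {m a k} : hyp m a k -> cardL [:: m; a; a.+1] (4 * m) = 13.
Proof.
move=> H; rewrite /cardL (cond_eq H).
rewrite (@count_iota_eq _ 0 (4 * m) (Lst m a)) //.
- apply: (sorted_uniq ltn_trans ltnn); rewrite /=; hd H; lia.
- by move=> x; rewrite !inE => hx; hd H; lia.
- by move=> x /andP[_ hx]; rewrite (inS_char H hx).
Qed.

Lemma noD {m a k x} : hyp m a k -> x < 2 * m -> ~~ inD [:: m; a; a.+1] (4 * m) x.
Proof.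
move=> H hx; apply/existsP => [[y /andP[/andP[y0 hy] /andP[z0 hz]]]].
have := inS_low H hy y0; have := inS_low H hz z0; have := ltn_ord y; lia.
Qed.

Lemma cardPL_eq {m a k} : hyp m a k -> cardPL [:: m; a; a.+1] (4 * m) = 3.
Proof.
move=> H; rewrite /cardPL (cond_eq H).
rewrite (@count_iota_eq _ 0 (4 * m) [:: m; a; a.+1]) //.
- rewrite /= !inE; hd H; lia.
- by move=> x; rewrite !inE => hx; hd H; lia.
move=> x /andP[_ hx]; rewrite /inP /inSstar (inS_char H hx).
case hL: (x \in Lst m a); last first.
  rewrite andbF /=; symmetry; move: hL; rewrite !inE; hd H; lia.
rewrite andbT; move: hL; rewrite !inE => hL.
repeat (case/orP: hL => hL); move/eqP: hL => ->.
- rewrite ltnn /=; hd H; lia.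
- rewrite (noD H); try (hd H; lia).
- rewrite (noD H); try (hd H; lia).
- rewrite (noD H); try (hd H; lia).
- rewrite (inD_wit (y:=m) H) ?andbF; try rewrite !inE; hd H; lia.
- rewrite (inD_wit (y:=m) H) ?andbF; try rewrite !inE; hd H; lia.
- rewrite (inD_wit (y:=m) H) ?andbF; try rewrite !inE; hd H; lia.
- rewrite (inD_wit (y:=m) H) ?andbF; try rewrite !inE; hd H; lia.
- rewrite (inD_wit (y:=a) H) ?andbF; try rewrite !inE; hd H; lia.
- rewrite (inD_wit (y:=a) H) ?andbF; try rewrite !inE; hd H; lia.
- rewrite (inD_wit (y:=a.+1) H) ?andbF; try rewrite !inE; hd H; lia.
- rewrite (inD_wit (y:=m) H) ?andbF; try rewrite !inE; hd H; lia.
- rewrite (inD_wit (y:=m) H) ?andbF; try rewrite !inE; hd H; lia.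
Qed.

Lemma Dq_sound {m a k x} : hyp m a k -> 4 * m <= x < 4 * m + m ->
  inD [:: m; a; a.+1] (4 * m) x -> x \in Dl m a k.
Proof.
move=> H /andP[lx ux] /existsP [y /andP[/andP[y0 hy] /andP[z0 hz]]].
have ly := inS_low H hy y0; have lz := inS_low H hz z0; have yx := ltn_ord y.
have hy4 : (y : nat) < 4 * m by lia.
have hz4 : x - y < 4 * m by lia.
rewrite (inS_char H hy4) in hy; rewrite (inS_char H hz4) in hz.
move: hy hz; rewrite !inE; hd H.
lia.
Qed.

Lemma cardDq_eq {m a k} : hyp m a k -> cardDq [:: m; a; a.+1] (4 * m) = 10.
Proof.
move=> H; rewrite /cardDq (cond_eq H) (mult_eq H).
rewrite (@count_iota_eq _ (4 * m) m (Dl m a k)) //.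
- apply: (sorted_uniq ltn_trans ltnn); rewrite /=; hd H; lia.
- by move=> x; rewrite !inE => hx; hd H; lia.
move=> x hx; apply/idP/idP; first exact: (Dq_sound H hx).
rewrite !inE => hL.
repeat (case/orP: hL => hL); move/eqP: hL => ->.
- rewrite (inD_wit (y:=m) H) //; try rewrite !inE; hd H; lia.
- rewrite (inD_wit (y:=m) H) //; try rewrite !inE; hd H; lia.
- rewrite (inD_wit (y:=m) H) //; try rewrite !inE; hd H; lia.
- rewrite (inD_wit (y:=m) H) //; try rewrite !inE; hd H; lia.
- rewrite (inD_wit (y:=m) H) //; try rewrite !inE; hd H; lia.
- rewrite (inD_wit (y:=m) H) //; try rewrite !inE; hd H; lia.
- rewrite (inD_wit (y:=a) H) //; try rewrite !inE; hd H; lia.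
- rewrite (inD_wit (y:=a) H) //; try rewrite !inE; hd H; lia.
- rewrite (inD_wit (y:=a) H) //; try rewrite !inE; hd H; lia.
- rewrite (inD_wit (y:=a.+1) H) //; try rewrite !inE; hd H; lia.
Qed.

Theorem corollary3p2 (k m : nat) :
  2 <= k -> 3 * k + 8 <= m -> m = k %[mod 2] ->
  let a := (3 * m + k) %/ 2 in
  W0 [:: m; a; a.+1] (4 * m) = (-1)%R.
Proof.
move=> h1 h2 h3 a.
have H : hyp m a k by rewrite /hyp /a; lia.
rewrite /W0 (cardPL_eq H) (cardL_eq H) (qq_eq H) (cardDq_eq H) (rho_eq H).
by [].
Qed.
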